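(* Let $n\ge 2$, let $\sigma=(1,2,\dots,n-1)\in S_n$, and let $\rho\in S_n$ be defined by $\rho(n-1)=n$, $\rho(n)=n-1$, $\rho(k)=n-1-k$ for $1\le k\le n-2$. Let $\tau\in S_n$ be a permutation of order $2$ with $\tau(n)=n-1$ and $\tau\sigma^k\tau=\sigma^{\tau(k)}\tau\sigma^{\tau\rho\tau(k)}$ for all $k\in\{1,\dots,n-2\}$ (such a $\tau$ exists exactly when $IK_n$ is a $G$-graph, and then $IK_n\cong\Phi(\langle\sigma,\tau\rangle,\{\sigma,\tau\})$). Then all the orbits of the action of the group $\langle\rho,\tau\rangle$ on $\{1,\dots,n\}$ have six elements, except for either one or two orbits with two elements and, if $n$ is odd, one orbit with either one or three elements.
   Context: $S_n$ is the symmetric group on $\{1,\dots,n\}$ with product given by composition of functions (rightmost applied first). $K_n$ is the complete simple graph on $n$ vertices and $IK_n$ its incidence graph. For a group $G$ and a multiset $S$ of elements of $G$, $\Phi(G,S)$ is the multigraph whose vertex set is the union over the members $s$ of $S$ of the right cosets $\langle s\rangle x$, $x\in G$, with one edge labeled $g$ between $\langle s\rangle x$ and $\langle t\rangle y$ ($s,t$ distinct members of $S$) for each $g\in\langle s\rangle x\cap\langle t\rangle y$; a $G$-graph is a multigraph isomorphic to some $\Phi(G,S)$. *)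

(* Defs.v *)
(* Points 1..n of the paper are encoded as 'I_n,
   the paper's point k (1 <= k <= n) being the ordinal of value k-1. *)
From HB Require Import structures.
From mathcomp Require Import all_boot all_order all_fingroup.
From mathcomp Require Import zify.
Set Implicit Arguments.
Unset Strict Implicit.
Unset Printing Implicit Defensive.

Definition sigma0 (n i : nat) : nat :=
  if i.+2 < n then i.+1 else if i.+2 == n then 0 else i.
Definition rho0 (n i : nat) : nat :=
  if i.+2 == n then n.-1 else if i.+1 == n then n - 2 else n - 3 - i.

Lemma sigma0_lt n (i : 'I_n) : sigma0 n i < n.
Proof. case: i => i Hi /=; rewrite /sigma0; repeat case: ifP => /eqP ?; lia. Qed.
Lemma rho0_lt n (i : 'I_n) : rho0 n i < n.
Proof. case: i => i Hi /=; rewrite /rho0; repeat case: ifP => /eqP ?; lia. Qed.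

Definition sigma_fun n (i : 'I_n) : 'I_n := Ordinal (sigma0_lt i).
Definition rho_fun n (i : 'I_n) : 'I_n := Ordinal (rho0_lt i).

Lemma sigma_inj n : injective (@sigma_fun n).
Proof.
move=> [i Hi] [j Hj] /(congr1 val) /=; rewrite /sigma0 => H; apply/val_inj => /=.
move: H; repeat case: ifP => /eqP ?; lia.
Qed.
Lemma rho_inj n : injective (@rho_fun n).
Proof.
move=> [i Hi] [j Hj] /(congr1 val) /=; rewrite /rho0 => H; apply/val_inj => /=.
move: H; repeat case: ifP => /eqP ?; lia.
Qed.

Definition sigma n : {perm 'I_n} := perm (@sigma_inj n).
Definition rho n : {perm 'I_n} := perm (@rho_inj n).

Definition orbits_of n (G : {set {perm 'I_n}}) : {set {set 'I_n}} :=
  [set orbit 'P G x | x : 'I_n].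

(* Main.v *)
Require Import Defs.
From HB Require Import structures.
From mathcomp Require Import all_boot all_order all_fingroup.
From mathcomp Require Import zify.
Set Implicit Arguments.
Unset Strict Implicit.
Unset Printing Implicit Defensive.

Ltac splitor := repeat match goal with H : is_true (_ || _) |- _ => case/orP: H => H end.

Section Dihedral.
Variable n : nat.
Variables r t : {perm 'I_n}.
Hypothesis rr : forall y, r (r y) = y.
Hypothesis tt : forall y, t (t y) = y.
Hypothesis brd : forall y, t (r (t y)) = r (t (r y)).

Definition C y := [set y; r (t y); t (r y)].
Definition Sx x := C x :|: C (r x).

Lemma cc y : r (t (r (t y))) = t (r y).
Proof. by rewrite brd rr. Qed.
Lemma ccc y : r (t (r (t (r (t y))))) = y.
Proof. by rewrite cc rr tt. Qed.

Lemma Sx_closed x y : y \in Sx x -> (r y \in Sx x) /\ (t y \in Sx x).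
Proof.
rewrite /Sx /C !inE => H; splitor; move/eqP: H => ->;
rewrite ?rr ?tt ?cc ?brd ?rr ?tt ?eqxx ?orbT //.
Qed.

Lemma orbit_Sx x : orbit 'P <<[set r; t]>>%g x = Sx x.
Proof.
apply/eqP; rewrite eqEsubset; apply/andP; split.
- have sub : <<[set r; t]>>%g \subset 'N(Sx x | 'P)%g.
    rewrite gen_subG; apply/subsetP => g /set2P[]->;
    apply/astabsP => y /=; apply/idP/idP => H.
    + by rewrite -[y]rr; case: (Sx_closed H).
    + by case: (Sx_closed H).
    + by rewrite -[y]tt; case: (Sx_closed H).
    + by case: (Sx_closed H).
  apply/subsetP => y /orbitP [g Hg <-].
  rewrite (astabs_act _ (subsetP sub g Hg)) /Sx /C !inE eqxx //.
- have Gr : r \in <<[set r; t]>>%g by apply: mem_gen; rewrite !inE eqxx.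
  have Gt : t \in <<[set r; t]>>%g by apply: mem_gen; rewrite !inE eqxx orbT.
  have M g : g \in <<[set r; t]>>%g -> g x \in orbit 'P <<[set r; t]>>%g x.
    by move=> Hg; have := mem_orbit 'P x Hg.
  apply/subsetP => y; rewrite /Sx /C !inE => H; splitor; move/eqP: H => ->.
  + exact: orbit_refl.
  + by rewrite -permM; apply: M; rewrite groupM.
  + by rewrite -permM; apply: M; rewrite groupM.
  + by apply: M.
  + by rewrite -!permM; apply: M; rewrite !groupM.
  + by rewrite rr; apply: M.
Qed.

Lemma C_card y : #|C y| = if r (t y) == y then 1 else 3.
Proof.
case: eqP => H.
  have H2 : t (r y) = y by rewrite -{1}H rr tt.
  have -> : C y = [set y] by apply/setP => z; rewrite /C !inE H H2 !orbb.
  by rewrite cards1.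
have H1 : (y == r (t y)) = false by apply/negbTE/eqP => E; apply: H; rewrite -E.
have H2 : (y == t (r y)) = false.
  apply/negbTE/eqP => E; apply: H.
  have E' : t y = r y by rewrite {1}E tt.
  by rewrite E' rr.
have H3 : (r (t y) == t (r y)) = false.
  apply/negbTE/eqP => E; apply: H; move: E; rewrite -cc => /perm_inj/perm_inj.
  by move=> <-.
have -> : C y = y |: (r (t y) |: [set t (r y)]).
  apply/setP => w; rewrite /C !inE.
  by case: (w == y); case: (w == r (t y)); case: (w == t (r y)).
by rewrite !cardsU1 !inE cards1 H1 H2 H3.
Qed.

Lemma C_mem y z : z \in C y -> C z = C y.
Proof.
rewrite /C !inE => Hz; splitor; move/eqP: Hz => -> //.
- apply/setP => w; rewrite !inE cc rr tt.
  by case: (w == y); case: (w == r (t y)); case: (w == t (r y)).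
- apply/setP => w; rewrite !inE tt rr brd rr.
  by case: (w == y); case: (w == r (t y)); case: (w == t (r y)).
Qed.

Lemma Crx x : (r (t (r x)) == r x) = (r (t x) == x).
Proof.
apply/eqP/eqP => E.
- have E1 : t (r x) = x by rewrite -[LHS]rr E rr.
  have E2 : t x = r x by rewrite -{1}E1 tt.
  by rewrite E2 rr.
- have E1 : t x = r x by rewrite -{2}E rr.
  have E2 : t (r x) = x by rewrite -E1 tt.
  by rewrite E2.
Qed.

Lemma Sx_card x : #|Sx x| = (if r x \in C x then 1 else 2) * (if r (t x) == x then 1 else 3).
Proof.
case: ifP => Hin.
  by rewrite /Sx (C_mem Hin) setUid C_card mul1n.
have H0 : C x :&: C (r x) = set0.
  apply/setP => w; rewrite inE in_set0; apply/negbTE/negP => /andP[H1 H2].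
  have e1 := C_mem H1; have e2 := C_mem H2.
  move: Hin; rewrite -e1 e2 /C !inE eqxx //.
rewrite /Sx cardsU H0 (C_card (r x)) Crx C_card cards0 subn0.
by case: ifP.
Qed.

Lemma F1 x : #|Sx x| \in [:: 1; 2; 3; 6].
Proof. by rewrite Sx_card; case: ifP; case: ifP. Qed.

Lemma F2 x : #|Sx x| = 2 -> r (t x) = x /\ r x != x.
Proof.
rewrite Sx_card; case: ifP => Hin; case: eqP => // E _; split => //.
by apply: contraFneq Hin => ->; rewrite /C !inE eqxx.
Qed.

Lemma F4 x : r x = x -> #|Sx x| \in [:: 1; 3].
Proof.
move=> E; rewrite Sx_card.
have -> : r x \in C x by rewrite E /C !inE eqxx.
by case: ifP.
Qed.

Lemma F3 x : #|Sx x| \in [:: 1; 3] -> exists2 y, y \in Sx x & r y = y.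
Proof.
rewrite Sx_card; case: ifP => Hin; last by case: ifP.
move=> _; move: Hin; rewrite /C !inE => H; splitor; move/eqP: H.
- by move=> E; exists x => //; rewrite /Sx /C !inE eqxx.
- move/perm_inj => E; exists (t (r x)); first by rewrite /Sx /C !inE eqxx !orbT.
  by rewrite -brd -E.
- move=> E; exists (t x); first by rewrite /Sx /C !inE rr eqxx !orbT.
  by rewrite -[in LHS](rr x) -brd -E rr.
Qed.
End Dihedral.

Lemma val_ord n (x : 'I_n) : val x = nat_of_ord x. Proof. by []. Qed.
Ltac plia := intros; repeat match goal with H : context [?x.-1] |- _ => rewrite -subn1 in H end;
  repeat match goal with H : context [isSub.val_subdef _ ?x] |- _ => rewrite (val_ord x) in H end;
  rewrite -?subn1; repeat match goal with |- context [isSub.val_subdef _ ?x] => rewrite (val_ord x) end;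
  match goal with |- is_true false => exfalso | _ => idtac end; lia.

Lemma mod2 v m : v < m + m -> v %% m = if v < m then v else v - m.
Proof.
move=> h2; case: ltnP => h1 /=; first by rewrite modn_small.
rewrite -{1}(subnK h1) modnDr modn_small //; plia.
Qed.

Lemma sigma_val n (i : 'I_n) : val (sigma n i) = sigma0 n i.
Proof. by rewrite /sigma permE. Qed.
Lemma rho_val n (i : 'I_n) : val (rho n i) = rho0 n i.
Proof. by rewrite /rho permE. Qed.

Lemma spow n e (i : 'I_n) : i < n.-1 -> val ((sigma n ^+ e)%g i) = (i + e) %% n.-1.
Proof.
move=> Hi; elim: e => [|e IH].
  by rewrite expg0 perm1 addn0 modn_small.
rewrite expgSr permM sigma_val IH addnS.
have E : ((i + e).+1) %% n.-1 = ((i + e) %% n.-1).+1 %% n.-1.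
  by rewrite -[((i + e) %% n.-1).+1]addn1 modnDml addn1.
rewrite E.
have : (i + e) %% n.-1 < n.-1 by apply: ltn_pmod; plia.
move: ((i + e) %% n.-1) => v hv.
rewrite mod2; last plia.
rewrite /sigma0; case: ltnP => h1; case: ltnP => h2; try plia;
case: eqP => h3; plia.
Qed.

Lemma spow_inf n e (i : 'I_n) : val i = n.-1 -> (sigma n ^+ e)%g i = i.
Proof.
move=> Hi; elim: e => [|e IH]; first by rewrite expg0 perm1.
rewrite expgSr permM IH; apply: val_inj; rewrite sigma_val /sigma0 /=.
move: Hi => /= Hi; rewrite Hi.
have := ltn_ord i; rewrite Hi => h.
case: ltnP => h1; first plia.
case: eqP => h2; plia.
Qed.

Lemma rho_invol n (x : 'I_n) : rho n (rho n x) = x.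
Proof.
apply: val_inj; rewrite !rho_val; case: x => v hv /=; rewrite /rho0.
case E1: (v.+2 == n); case E2: (v.+1 == n) => /=; move: E1 E2 => /eqP E1 /eqP E2;
by repeat case: eqP => ?; plia.
Qed.

Section Conc.
Variable n : nat.
Variable t : {perm 'I_n}.
Hypothesis n2 : 2 <= n.
Hypothesis tt : forall y, t (t y) = y.
Hypothesis Hinf : forall x : 'I_n, val x = n.-1 -> val (t x) = n - 2.
Hypothesis Hrel : forall j : 'I_n, j.+3 <= n ->
     forall x : 'I_n,
       t (((sigma n) ^+ j.+1)%g (t x)) =
       ((sigma n) ^+ (t j).+1)%g
         (t (((sigma n) ^+ (t (rho n (t j))).+1)%g x)).
Local Notation r := (rho n).

Lemma t_zero (x : 'I_n) : val x = n - 2 -> val (t x) = n.-1.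
Proof.
move=> Hx.
have hI : n.-1 < n by plia.
have E : t (Ordinal hI) = x by apply: val_inj; rewrite Hinf.
by rewrite -E tt.
Qed.

Lemma fact1 (j : 'I_n) : j < n - 2 -> t j < n - 2.
Proof.
move=> hj; have := ltn_ord (t j); case: (ltnP (t j) (n-2)) => // h1 h2.
case: (eqVneq (val (t j)) (n - 2)) => h3.
  have := t_zero h3; rewrite tt; plia.
have h4 : val (t j) = n.-1 by plia.
have := Hinf h4; rewrite tt; plia.
Qed.

Lemma rho_small (x : 'I_n) : x < n - 2 -> val (r x) = n - 3 - x.
Proof. move=> h; rewrite rho_val /rho0; by repeat case: eqP => ?; plia. Qed.
Lemma rho_inf (x : 'I_n) : val x = n.-1 -> val (r x) = n - 2.
Proof. move=> h; rewrite rho_val /rho0; by repeat case: eqP => ?; plia. Qed.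
Lemma rho_zero (x : 'I_n) : val x = n - 2 -> val (r x) = n.-1.
Proof. move=> h; rewrite rho_val /rho0; by repeat case: eqP => ?; plia. Qed.

Lemma relA (j : 'I_n) : t (r j) = r (t (r (t j))).
Proof.
have hj := ltn_ord j.
case: (ltnP j (n - 2)) => hj2.
- have Hj : j.+3 <= n by plia.
  have := Hrel Hj (t (r j)); rewrite tt.
  have hr : r j < n - 2 by rewrite rho_small //; plia.
  have hX := fact1 hr.
  have htj := fact1 hj2.
  have hrtj : r (t j) < n - 2 by rewrite rho_small //; plia.
  have hv := fact1 hrtj.
  have L : val ((sigma n ^+ j.+1)%g (r j)) = n - 2.
    rewrite spow; last plia.
    rewrite rho_small // mod2; last plia.
    case: ifP; plia.
  have L2 := t_zero L.
  move=> E.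
  set W := t ((sigma n ^+ (t (r (t j))).+1)%g (t (r j))).
  have L3 : val ((sigma n ^+ (t j).+1)%g W) = n.-1 by rewrite -E.
  have hW : val W = n.-1.
    case: (ltnP W n.-1) => hw; last by have := ltn_ord W; plia.
    move: L3; rewrite spow //.
    have : (W + (t j).+1) %% n.-1 < n.-1 by apply: ltn_pmod; plia.
    plia.
  have hW2 := Hinf hW.
  rewrite /W tt spow in hW2; last plia.
  rewrite mod2 in hW2; last plia.
  apply: val_inj; rewrite rho_small //.
  move: hW2; case: ifP; plia.
- case: (eqVneq (val j) (n - 2)) => hz.
  + apply: val_inj.
    have h1 := rho_zero hz. have h2 := Hinf h1.
    have h3 := t_zero hz. have h4 := rho_inf h3. have h5 := t_zero h4.
    have h6 := rho_inf h5. by rewrite h2 h6.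
  + have hi : val j = n.-1 by plia.
    apply: val_inj.
    have h1 := rho_inf hi. have h2 := t_zero h1.
    have h3 := Hinf hi. have h4 := rho_zero h3. have h5 := Hinf h4.
    have h6 := rho_zero h5. by rewrite h2 h6.
Qed.

Lemma brd y : t (r (t y)) = r (t (r y)).
Proof. by rewrite relA tt. Qed.

Lemma relB (y y' : 'I_n) : y < n - 2 -> y' < n - 2 -> t y = r y -> t y' = r y' ->
  y' = y \/ y' = r y.
Proof.
move=> hy hy' ty ty'.
have Hy : y.+3 <= n by plia.
have Hy' : y'.+3 <= n by plia.
have E1 := Hrel Hy (t y'); have E2 := Hrel Hy' (t y).
rewrite tt ty rho_invol ty ty' in E1.
rewrite tt ty' rho_invol ty' ty in E2.
have hry := rho_small hy; have hry' := rho_small hy'.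
have L : (sigma n ^+ y.+1)%g y' = (sigma n ^+ y'.+1)%g y.
  apply: val_inj; rewrite !spow; try plia; congr (_ %% _); plia.
have P : (sigma n ^+ (r y).+1)%g (r y') = (sigma n ^+ (r y').+1)%g (r y).
  apply: val_inj; rewrite !spow; try plia; congr (_ %% _); plia.
rewrite L P E2 in E1.
move: E1; set w := t _ => E.
case: (ltnP w n.-1) => hw.
- left; apply: val_inj.
  move/(congr1 val): E; rewrite !spow // => /eqP.
  rewrite eqn_modDl !modn_small; try plia.
  all: try (move=> /eqP; plia).
- right; apply: val_inj.
  have hw' : val w = n.-1 by have := ltn_ord w; plia.
  have := Hinf hw'; rewrite /w tt spow; last plia.
  rewrite mod2; last plia.
  case: ifP; plia.
Qed.
End Conc.

Theorem proposition9 (n : nat) (tau : {perm 'I_n}) :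
  2 <= n ->
  #[tau]%g = 2 ->
  (forall x : 'I_n, val x = n.-1 -> val (tau x) = n - 2) ->
  (forall j : 'I_n, j.+3 <= n ->
     forall x : 'I_n,
       tau (((sigma n) ^+ j.+1)%g (tau x)) =
       ((sigma n) ^+ (tau j).+1)%g
         (tau (((sigma n) ^+ (tau (rho n (tau j))).+1)%g x))) ->
  let Orb := orbits_of <<[set rho n; tau]>>%g in
  [/\ forall O, O \in Orb -> #|O| \in [:: 1; 2; 3; 6],
      #|[set O in Orb | #|O| == 2]| \in [:: 1; 2] &
      #|[set O in Orb | (#|O| == 1) || (#|O| == 3)]| = (odd n : nat)].
Proof.
move=> n2 Hord Hinf Hrel Orb.
have tt : forall y, tau (tau y) = y.
  move=> y; have := expg_order tau; rewrite Hord expgS expg1 => E.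
  by rewrite -permM E perm1.
have rr := @rho_invol n.
have bd := brd n2 tt Hinf Hrel.
have orbE x : orbit 'P <<[set rho n; tau]>>%g x = Sx (rho n) tau x := orbit_Sx rr tt bd x.
have Gr : rho n \in <<[set rho n; tau]>>%g by apply: mem_gen; rewrite !inE eqxx.
have orb_r x : orbit 'P <<[set rho n; tau]>>%g (rho n x) = orbit 'P <<[set rho n; tau]>>%g x.
  exact: (orbit_act 'P x Gr).
have fixu : forall y : 'I_n, rho n y = y -> val y + val y + 3 = n.
  move=> y /(congr1 val); rewrite rho_val /rho0; have := ltn_ord y.
  case: eqP => ?; [|case: eqP => ?]; plia.
have hI : n.-1 < n by plia.
have hZ : n - 2 < n by plia.
pose I := Ordinal hI; pose Z := Ordinal hZ.
have tI : tau I = Z by apply: val_inj; rewrite Hinf.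
have tZ : tau Z = I by rewrite -tI tt.
have rI : rho n I = Z by apply: val_inj; rewrite rho_inf.
have rZ : rho n Z = I by rewrite -rI rr.
rewrite /Orb /orbits_of; split.
- move=> O /imsetP [x _ ->]; rewrite orbE; exact: (F1 rr tt bd x).
- set OI := orbit 'P <<[set rho n; tau]>>%g I.
  have ZI : (Z == I) = false by apply/negbTE/eqP => /(congr1 val) /=; plia.
  have OI2 : OI \in [set O in [set orbit 'P <<[set rho n; tau]>>%g x | x : 'I_n] | #|O| == 2].
    rewrite inE imset_f //= /OI orbE (Sx_card rr tt bd) /C !inE ?rI ?tI ?rZ ?tZ.
    by rewrite ZI eqxx.
  have small : forall x, orbit 'P <<[set rho n; tau]>>%g x != OI -> x < n - 2.
    move=> x hx; case: (ltnP x (n - 2)) => // h; exfalso; move: hx.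
    have : x = I \/ x = Z.
      case: (eqVneq (val x) (n - 2)) => h2; [right|left]; apply: val_inj => //=.
      have := ltn_ord x; plia.
    by case => ->; rewrite /OI ?eqxx // -rI orb_r eqxx.
  have info : forall O, O \in [set O in [set orbit 'P <<[set rho n; tau]>>%g x | x : 'I_n] | #|O| == 2] ->
      O != OI -> exists2 x, O = orbit 'P <<[set rho n; tau]>>%g x & [/\ x < n - 2 & tau x = rho n x].
    move=> O; rewrite inE => /andP[/imsetP[x _ ->] hc] hne.
    exists x => //; split; first exact: small.
    move: hc; rewrite orbE => /eqP /(F2 rr tt bd) [E _].
    by rewrite -{2}E rr.
  have uniq2 : forall O1 O2,
      O1 \in [set O in [set orbit 'P <<[set rho n; tau]>>%g x | x : 'I_n] | #|O| == 2] ->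
      O2 \in [set O in [set orbit 'P <<[set rho n; tau]>>%g x | x : 'I_n] | #|O| == 2] ->
      O1 != OI -> O2 != OI -> O1 = O2.
    move=> O1 O2 h1 h2 n1 n2'.
    case: (info O1 h1 n1) => x1 -> [s1 e1].
    case: (info O2 h2 n2') => x2 -> [s2 e2].
    by case: (relB n2 tt Hinf Hrel s1 s2 e1 e2) => ->; rewrite ?orb_r.
  rewrite (cardsD1 OI) OI2.
  have : #|[set O in [set orbit 'P <<[set rho n; tau]>>%g x | x : 'I_n] | #|O| == 2] :\ OI| <= 1.
    apply/card_le1_eqP => O1 O2 /setD1P[n1 h1] /setD1P[n2' h2].
    symmetry; exact: uniq2.
  by case: #|_| => [|[|]].
- case Hodd: (odd n).
  + have hh := odd_double_half n; rewrite Hodd -addnn in hh.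
    have hz : n./2 - 1 < n by plia.
    pose z := Ordinal hz.
    have rz : rho n z = z.
      apply: val_inj; rewrite rho_val /rho0 /=.
      case: eqP => ?; [|case: eqP => ?]; plia.
    have -> : [set O in [set orbit 'P <<[set rho n; tau]>>%g x | x : 'I_n] | (#|O| == 1) || (#|O| == 3)]
        = [set orbit 'P <<[set rho n; tau]>>%g z].
      apply/setP => O; rewrite !inE; apply/idP/idP.
      * move=> /andP[/imsetP[x _ ->] hc].
        have hc' : #|Sx (rho n) tau x| \in [:: 1; 3] by rewrite -orbE !inE.
        case: (F3 rr tt bd hc') => y hy ry.
        have yz : y = z by apply: val_inj; have := fixu y ry; rewrite /=; plia.
        by rewrite orbit_eq_mem orbit_sym orbE -yz.
      * move/eqP => ->; rewrite imset_f //= orbE.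
        by have := F4 rr tt bd rz; rewrite !inE.
    by rewrite cards1.
  + apply/eqP; rewrite cards_eq0; apply/eqP/setP => O; rewrite inE in_set0.
    apply/negbTE/negP => /andP[/imsetP[x _ ->] hc].
    have hc' : #|Sx (rho n) tau x| \in [:: 1; 3] by rewrite -orbE !inE.
    case: (F3 rr tt bd hc') => y hy ry.
    have := fixu y ry; have hh := odd_double_half n; rewrite Hodd -addnn in hh.
    plia.
Qed.
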